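(* Let $(\mathfrak{g},[\cdot,\cdot]_{\mathfrak{g}},\phi_{\mathfrak{g}})$ and $(\mathfrak{g}^*,[\cdot,\cdot]_{\mathfrak{g}^*},\phi_{\mathfrak{g}}^* )$ be two weakly involutive Hom-Lie algebras, where $\mathfrak{g}$ is finite-dimensional, $\mathfrak g^*$ is its dual space and $\phi_{\mathfrak{g}}^*$ is the dual map of $\phi_{\mathfrak{g}}$. Define $\Delta:\mathfrak{g}\to\mathfrak{g}\otimes\mathfrak{g}$ by $\langle \Delta(x),a\otimes b\rangle=\langle x,[a,b]_{\mathfrak{g}^*}\rangle$. Then the following conditions are equivalent: (i) $(\mathfrak{g},\mathfrak{g}^* )$ is a Hom-Lie bialgebra, i.e. $\Delta([x,y]_{\mathfrak{g}})=\mathrm{ad}_{\phi_{\mathfrak{g}}(x)}\Delta(y)-\mathrm{ad}_{\phi_{\mathfrak{g}}(y)}\Delta(x)$ for all $x,y\in\mathfrak{g}$; (ii) $(\mathfrak{g},\mathfrak{g}^*;\mathrm{ad}^\circ,\mathfrak{ad}^\circ)$ is a matched pair of Hom-Lie algebras; (iii) $(\mathfrak{g}\oplus\mathfrak{g}^*;\mathfrak{g},\mathfrak{g}^* )$ is a Manin triple of Hom-Lie algebras associated to the bilinear form $\mathfrak{B}(x+a,y+b)=\langle x,b\rangle+\langle y,a\rangle$ ($x,y\in\mathfrak g$, $a,b\in\mathfrak g^*$).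
   Context: A Hom-Lie algebra $(\mathfrak{h},[\cdot,\cdot]_{\mathfrak{h}},\phi_{\mathfrak{h}})$ is a vector space $\mathfrak h$ with a skew-symmetric bilinear map $[\cdot,\cdot]_{\mathfrak h}$ and a linear map $\phi_{\mathfrak h}$ satisfying $\phi_{\mathfrak h}[x,y]_{\mathfrak h}=[\phi_{\mathfrak h}(x),\phi_{\mathfrak h}(y)]_{\mathfrak h}$ and the Hom-Jacobi identity $[\phi_{\mathfrak h}(x),[y,z]_{\mathfrak h}]_{\mathfrak h}+[\phi_{\mathfrak h}(y),[z,x]_{\mathfrak h}]_{\mathfrak h}+[\phi_{\mathfrak h}(z),[x,y]_{\mathfrak h}]_{\mathfrak h}=0$. It is weakly involutive if $[\phi_{\mathfrak h}^2(x),y]_{\mathfrak h}=[x,y]_{\mathfrak h}$ for all $x,y$. A representation $(V,\beta,\rho)$ of $\mathfrak h$ is a vector space $V$, $\beta\in\mathfrak{gl}(V)$ and a linear map $\rho:\mathfrak h\to\mathfrak{gl}(V)$ with $\rho(\phi_{\mathfrak h}(x))\beta=\beta\rho(x)$ and $\rho([x,y]_{\mathfrak h})\beta=\rho(\phi_{\mathfrak h}(x))\rho(y)-\rho(\phi_{\mathfrak h}(y))\rho(x)$. The adjoint representation is $(\mathfrak h,\phi_{\mathfrak h},\mathrm{ad})$, $\mathrm{ad}_x y=[x,y]_{\mathfrak h}$. For $z\in\mathfrak g$ and $t\in\mathfrak g\otimes\mathfrak g$, $\mathrm{ad}_z t:=(\mathrm{ad}_z\otimes\phi_{\mathfrak g}+\phi_{\mathfrak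 g}\otimes \mathrm{ad}_z)t$. Here $\mathrm{ad}^\circ:\mathfrak g\to\mathfrak{gl}(\mathfrak g^* )$ is given by $\langle \mathrm{ad}^\circ_x a,y\rangle=-\langle a,[\phi_{\mathfrak g}(x),y]_{\mathfrak g}\rangle$ and $\mathfrak{ad}^\circ:\mathfrak g^*\to\mathfrak{gl}(\mathfrak g)$ is given by $\langle \mathfrak{ad}^\circ_a x,b\rangle=-\langle x,[\phi_{\mathfrak g}^*(a),b]_{\mathfrak g^*}\rangle$. A matched pair of Hom-Lie algebras $(\mathfrak g,\mathfrak g';\rho,\rho')$ consists of Hom-Lie algebras $(\mathfrak g,[\cdot,\cdot]_{\mathfrak g},\phi_{\mathfrak g})$, $(\mathfrak g',[\cdot,\cdot]_{\mathfrak g'},\phi_{\mathfrak g'})$, a representation $(\mathfrak g',\phi_{\mathfrak g'},\rho)$ of $\mathfrak g$ and a representation $(\mathfrak g,\phi_{\mathfrak g},\rho')$ of $\mathfrak g'$ such that for all $x,y\in\mathfrak g$, $x',y'\in\mathfrak g'$: $\rho'(\phi_{\mathfrak g'}(x'))[x,y]_{\mathfrak g}=[\rho'(x')x,\phi_{\mathfrak g}(y)]_{\mathfrak g}+[\phi_{\mathfrak g}(x),\rho'(x')y]_{\mathfrak g}+\rho'(\rho(y)x')\phi_{\mathfrak g}(x)-\rho'(\rho(x)x')\phi_{\mathfrak g}(y)$ and $\rho(\phi_{\mathfrak g}(x))[x',y']_{\mathfrak g'}=[\rho(x)x',\phi_{\mathfrak g'}(y')]_{\mathfrak g'}+[\phi_{\mathfrak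 g'}(x'),\rho(x)y']_{\mathfrak g'}+\rho(\rho'(y')x)\phi_{\mathfrak g'}(x')-\rho(\rho'(x')x)\phi_{\mathfrak g'}(y')$. A bilinear form $\mathfrak B$ on a Hom-Lie algebra $(\mathfrak k,[\cdot,\cdot]_{\mathfrak k},\phi_{\mathfrak k})$ is invariant if $\mathfrak B([x,y]_{\mathfrak k},z)=\mathfrak B(x,[\phi_{\mathfrak k}(y),z]_{\mathfrak k})$ and $\mathfrak B(\phi_{\mathfrak k}(x),y)=\mathfrak B(x,\phi_{\mathfrak k}(y))$ for all $x,y,z$. A Manin triple of Hom-Lie algebras $(\mathfrak k;\mathfrak g,\mathfrak g')$ is a Hom-Lie algebra $\mathfrak k$ with a nondegenerate symmetric invariant bilinear form $\mathfrak B$ such that $\mathfrak g,\mathfrak g'$ are isotropic Hom-Lie subalgebras of $\mathfrak k$ (subspaces closed under the bracket and stable under $\phi_{\mathfrak k}$, with the induced structures being the given Hom-Lie algebra structures) and $\mathfrak k=\mathfrak g\oplus\mathfrak g'$ as vector spaces. *)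

(* Defs.v *)
From HB Require Import structures.
From mathcomp Require Import all_boot all_order all_algebra.
Set Implicit Arguments. Unset Strict Implicit. Unset Printing Implicit Defensive.
Import GRing.Theory.
Local Open Scope ring_scope.

Section HomLie.
Variable K : fieldType.

Definition HomLie (V : lmodType K) (br : V -> V -> V) (phi : V -> V) : Prop :=
  [/\ (forall (c : K) x y z, br (c *: x + y) z = c *: br x z + br y z)
      /\ (forall (c : K) x y z, br x (c *: y + z) = c *: br x y + br x z),
      (forall x y, br x y = - br y x),
      (forall (c : K) x y, phi (c *: x + y) = c *: phi x + phi y),
      (forall x y, phi (br x y) = br (phi x) (phi y)) &
      (forall x y z, br (phi x) (br y z) + br (phi y) (br z x)
                     + br (phi z) (br x y) = 0)].

Definition weakly_involutive (V : lmodType K) (br : V -> V -> V) (phi : V -> V)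
  : Prop := forall x y, br (phi (phi x)) y = br x y.

Definition HomLieRep (V W : lmodType K) (br : V -> V -> V) (phi : V -> V)
    (beta : W -> W) (rho : V -> W -> W) : Prop :=
  [/\ (forall (c : K) w w', beta (c *: w + w') = c *: beta w + beta w'),
      (forall (c : K) x y w, rho (c *: x + y) w = c *: rho x w + rho y w),
      (forall (c : K) x w w', rho x (c *: w + w') = c *: rho x w + rho x w'),
      (forall x w, rho (phi x) (beta w) = beta (rho x w)) &
      (forall x y w, rho (br x y) (beta w)
                     = rho (phi x) (rho y w) - rho (phi y) (rho x w))].

Definition matched_pair (G G' : lmodType K)
    (br : G -> G -> G) (phi : G -> G) (br' : G' -> G' -> G') (phi' : G' -> G')
    (rho : G -> G' -> G') (rho' : G' -> G -> G) : Prop :=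
  [/\ HomLie br phi, HomLie br' phi',
      HomLieRep br phi phi' rho, HomLieRep br' phi' phi rho' &
      (forall x y x', rho' (phi' x') (br x y)
         = br (rho' x' x) (phi y) + br (phi x) (rho' x' y)
           + rho' (rho y x') (phi x) - rho' (rho x x') (phi y)) /\
      (forall x x' y', rho (phi x) (br' x' y')
         = br' (rho x x') (phi' y') + br' (phi' x') (rho x y')
           + rho (rho' y' x) (phi' x') - rho (rho' x' x) (phi' y'))].

(** Manin triple (g (+) g'; g, g') of Hom-Lie algebras: the Hom-Lie algebra
    k = G * G' with bracket brk and twist phik, and bilinear form B;
    g = G * 0 and g' = 0 * G' are isotropic Hom-Lie subalgebras carrying
    the given structures. *)
Definition manin_triple (G G' : lmodType K)
    (br : G -> G -> G) (phi : G -> G) (br' : G' -> G' -> G') (phi' : G' -> G')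
    (brk : (G * G')%type -> (G * G')%type -> (G * G')%type)
    (phik : (G * G')%type -> (G * G')%type)
    (B : (G * G')%type -> (G * G')%type -> K) : Prop :=
  [/\ HomLie br phi /\ HomLie br' phi', HomLie brk phik,
      [/\ (forall (c : K) u v w, B (c *: u + v) w = c * B u w + B v w),
          (forall (c : K) u v w, B u (c *: v + w) = c * B u v + B u w)
          /\ (forall u v, B u v = B v u),
          (forall u, (forall v, B u v = 0) -> u = 0),
          (forall u v w, B (brk u v) w = B u (brk (phik v) w)) &
          (forall u v, B (phik u) v = B u (phik v))],
      [/\ (forall x y : G, B (x, 0) (y, 0) = 0),
          (forall x y : G, brk (x, 0) (y, 0) = (br x y, 0)) &
          (forall x : G, phik (x, 0) = (phi x, 0))] &
      [/\ (forall a b : G', B (0, a) (0, b) = 0),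
          (forall a b : G', brk (0, a) (0, b) = (0, br' a b)) &
          (forall a : G', phik (0, a) = (0, phi' a))]].

(** Concrete finite-dimensional model: g = K^n as row vectors, g^* = K^n
    with the standard pairing, g (x) g = n x n matrices, x (x) y = x^T y. *)
Variable n : nat.
Notation V := 'rV[K]_n.

Definition pairing (x a : V) : K := \sum_(i < n) x 0 i * a 0 i.
Definition ev (i : 'I_n) : V := delta_mx 0 i.

(** dual map phi^* : <x, phi^* a> = <phi x, a> *)
Definition dual_map (phi : V -> V) : V -> V :=
  fun a => \row_j pairing (phi (ev j)) a.

(** (f (x) h) t for t in g (x) g *)
Definition tensor_map (f h : V -> V) (t : 'M[K]_n) : 'M[K]_n :=
  \sum_(i < n) \sum_(j < n) t i j *: ((f (ev i))^T *m h (ev j)).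

Definition ad_tensor (br : V -> V -> V) (phi : V -> V) (z : V) (t : 'M[K]_n)
  : 'M[K]_n := tensor_map (br z) phi t + tensor_map phi (br z) t.

Definition cobracket (brd : V -> V -> V) (x : V) : 'M[K]_n :=
  \matrix_(i, j) pairing x (brd (ev i) (ev j)).

Definition hom_lie_bialgebra (br : V -> V -> V) (phi : V -> V)
    (brd : V -> V -> V) : Prop :=
  forall x y, cobracket brd (br x y)
    = ad_tensor br phi (phi x) (cobracket brd y)
      - ad_tensor br phi (phi y) (cobracket brd x).

Definition coad (br : V -> V -> V) (phi : V -> V) (x a : V) : V :=
  \row_j - pairing a (br (phi x) (ev j)).

Definition coad_dual (phi : V -> V) (brd : V -> V -> V) (a x : V) : V :=
  \row_j - pairing x (brd (dual_map phi a) (ev j)).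

Definition standard_form (u v : (V * V)%type) : K :=
  pairing u.1 v.2 + pairing v.1 u.2.

End HomLie.

(* Main.v *)
Require Import Defs.
From mathcomp Require Import all_boot all_order all_algebra.
From mathcomp Require Import ring.
Set Implicit Arguments. Unset Strict Implicit. Unset Printing Implicit Defensive.
Import GRing.Theory.
Local Open Scope ring_scope.


Section Basic.
Variables (K : fieldType) (n : nat).
Local Notation V := 'rV[K]_n.

Definition lin (f : V -> V) := forall (c : K) u v, f (c *: u + v) = c *: f u + f v.
Definition slin (f : V -> K) := forall (c : K) u v, f (c *: u + v) = c * f u + f v.

Lemma lin0 f : lin f -> f 0 = 0.
Proof.
move=> H; have h := H 1 0 0; rewrite !scale1r addr0 in h.
by apply: (addrI (f 0)); rewrite addr0 -h.
Qed.
Lemma linD f : lin f -> forall u v, f (u + v) = f u + f v.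
Proof. by move=> H u v; have := H 1 u v; rewrite !scale1r. Qed.
Lemma linZ f : lin f -> forall c u, f (c *: u) = c *: f u.
Proof. by move=> H c u; rewrite -(addr0 (c *: u)) H lin0 // addr0. Qed.
Lemma linN f : lin f -> forall u, f (- u) = - f u.
Proof. by move=> H u; rewrite -scaleN1r linZ // scaleN1r. Qed.
Lemma linB f : lin f -> forall u v, f (u - v) = f u - f v.
Proof. by move=> H u v; rewrite linD // linN. Qed.

Lemma slin0 f : slin f -> f 0 = 0.
Proof.
move=> H; have h := H 1 0 0; rewrite scale1r addr0 mul1r in h.
by apply: (addrI (f 0)); rewrite addr0 -h.
Qed.
Lemma slinD f : slin f -> forall u v, f (u + v) = f u + f v.
Proof. by move=> H u v; have := H 1 u v; rewrite !scale1r mul1r. Qed.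
Lemma slinZ f : slin f -> forall c u, f (c *: u) = c * f u.
Proof. by move=> H c u; rewrite -(addr0 (c *: u)) H slin0 // addr0. Qed.

Lemma slin_expand f : slin f -> forall y : V, f y = \sum_(j < n) y 0 j * f (ev K j).
Proof.
move=> H y; rewrite {1}(row_sum_delta y).
rewrite (big_morph f (slinD H) (slin0 H)).
by apply: eq_bigr => j _; rewrite slinZ.
Qed.

Lemma pairingC (x a : V) : pairing x a = pairing a x.
Proof. by apply: eq_bigr => i _; rewrite mulrC. Qed.

Lemma pairing_linl (a : V) : slin (fun x => pairing x a).
Proof.
move=> c u v; rewrite /pairing mulr_sumr -big_split /=.
by apply: eq_bigr => i _; rewrite !mxE mulrDl mulrA.
Qed.
Lemma pairing_linr (x : V) : slin (pairing x).
Proof. by move=> c u v; rewrite !(pairingC x) pairing_linl. Qed.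

Lemma pairing_ev (x : V) j : pairing x (ev K j) = x 0 j.
Proof.
rewrite /pairing (bigD1 j) //= big1 => [|i nij]; rewrite /ev !mxE.
  by rewrite !eqxx mulr1 addr0.
by rewrite (negbTE nij) andbF mulr0.
Qed.

Lemma vec_eq (u v : V) : (forall b, pairing u b = pairing v b) -> u = v.
Proof. by move=> H; apply/rowP => j; rewrite -!pairing_ev. Qed.

Lemma pD1 (x y a : V) : pairing (x + y) a = pairing x a + pairing y a.
Proof. exact: slinD (pairing_linl a) x y. Qed.
Lemma pD2 (x a b : V) : pairing x (a + b) = pairing x a + pairing x b.
Proof. exact: slinD (pairing_linr x) a b. Qed.
Lemma pZ1 (c : K) (x a : V) : pairing (c *: x) a = c * pairing x a.
Proof. exact: slinZ (pairing_linl a) c x. Qed.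
Lemma pZ2 (c : K) (x a : V) : pairing x (c *: a) = c * pairing x a.
Proof. exact: slinZ (pairing_linr x) c a. Qed.
Lemma pN1 (x a : V) : pairing (- x) a = - pairing x a.
Proof. by rewrite -scaleN1r pZ1 mulN1r. Qed.
Lemma pN2 (x a : V) : pairing x (- a) = - pairing x a.
Proof. by rewrite -scaleN1r pZ2 mulN1r. Qed.
Lemma p01 (a : V) : pairing 0 a = 0.
Proof. exact: slin0 (pairing_linl a). Qed.
Lemma p02 (a : V) : pairing a 0 = 0.
Proof. exact: slin0 (pairing_linr a). Qed.
Lemma pB1 (x y a : V) : pairing (x - y) a = pairing x a - pairing y a.
Proof. by rewrite pD1 pN1. Qed.
Lemma pB2 (x a b : V) : pairing x (a - b) = pairing x a - pairing x b.
Proof. by rewrite pD2 pN2. Qed.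

End Basic.


Section HL.
Variables (K : fieldType) (n : nat).
Local Notation V := 'rV[K]_n.

Lemma pairing_row (F : 'I_n -> K) (y : V) : pairing (\row_j F j) y = \sum_j F j * y 0 j.
Proof. by apply: eq_bigr => j _; rewrite mxE. Qed.
Lemma pairing_rowr (F : 'I_n -> K) (y : V) : pairing y (\row_j F j) = \sum_j y 0 j * F j.
Proof. by apply: eq_bigr => j _; rewrite mxE. Qed.

Variables (br : V -> V -> V) (phi : V -> V).
Hypothesis HL : HomLie br phi.

Lemma br_linl z : lin (fun x => br x z).
Proof. by case: HL => [[H _] _ _ _ _] c x y; exact: H. Qed.
Lemma br_linr x : lin (br x).
Proof. by case: HL => [[_ H] _ _ _ _] c y z; exact: H. Qed.
Lemma br_skew x y : br x y = - br y x.
Proof. by case: HL => [_ H _ _ _]; exact: H. Qed.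
Lemma phi_lin : lin phi.
Proof. by case: HL => [_ _ H _ _]; exact: H. Qed.
Lemma phi_mul x y : phi (br x y) = br (phi x) (phi y).
Proof. by case: HL => [_ _ _ H _]; exact: H. Qed.
Lemma br_jac x y z : br (phi x) (br y z) + br (phi y) (br z x) + br (phi z) (br x y) = 0.
Proof. by case: HL => [_ _ _ _ H]; exact: H. Qed.

Lemma br0l y : br 0 y = 0. Proof. exact: (lin0 (br_linl y)). Qed.
Lemma br0r y : br y 0 = 0. Proof. exact: (lin0 (br_linr y)). Qed.
Lemma brNl x y : br (- x) y = - br x y. Proof. exact: (linN (br_linl y)). Qed.
Lemma brNr x y : br x (- y) = - br x y. Proof. exact: (linN (br_linr x)). Qed.
Lemma brDl x y z : br (x + y) z = br x z + br y z. Proof. exact: (linD (br_linl z)). Qed.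
Lemma brDr x y z : br x (y + z) = br x y + br x z. Proof. exact: (linD (br_linr x)). Qed.
Lemma brZl c x y : br (c *: x) y = c *: br x y. Proof. exact: (linZ (br_linl y)). Qed.
Lemma brZr c x y : br x (c *: y) = c *: br x y. Proof. exact: (linZ (br_linr x)). Qed.
Lemma phi0 : phi 0 = 0. Proof. exact: (lin0 phi_lin). Qed.
Lemma phiN x : phi (- x) = - phi x. Proof. exact: (linN phi_lin). Qed.
Lemma phiD x y : phi (x + y) = phi x + phi y. Proof. exact: (linD phi_lin). Qed.
Lemma phiZ c x : phi (c *: x) = c *: phi x. Proof. exact: (linZ phi_lin). Qed.

Lemma coad_linr x : lin (coad br phi x).
Proof.
move=> c a b; apply/rowP => j; rewrite !mxE.
by rewrite pD1 pZ1 opprD mulrN.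
Qed.
Lemma coad_linl a : lin (fun x => coad br phi x a).
Proof.
move=> c x y; apply/rowP => j; rewrite !mxE.
by rewrite phiD phiZ brDl brZl pD2 pZ2 opprD mulrN.
Qed.
Lemma coad0l a : coad br phi 0 a = 0. Proof. exact: (lin0 (coad_linl a)). Qed.
Lemma coad0r x : coad br phi x 0 = 0. Proof. exact: (lin0 (coad_linr x)). Qed.
Lemma coadNl x a : coad br phi (- x) a = - coad br phi x a. Proof. exact: (linN (coad_linl a)). Qed.
Lemma coadNr x a : coad br phi x (- a) = - coad br phi x a. Proof. exact: (linN (coad_linr x)). Qed.
Lemma coadDl x y a : coad br phi (x + y) a = coad br phi x a + coad br phi y a.
Proof. exact: (linD (coad_linl a)). Qed.
Lemma coadDr x a b : coad br phi x (a + b) = coad br phi x a + coad br phi x b.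
Proof. exact: (linD (coad_linr x)). Qed.
Lemma coadZl c x a : coad br phi (c *: x) a = c *: coad br phi x a.
Proof. exact: (linZ (coad_linl a)). Qed.
Lemma coadZr c x a : coad br phi x (c *: a) = c *: coad br phi x a.
Proof. exact: (linZ (coad_linr x)). Qed.

Lemma coadE x a y : pairing (coad br phi x a) y = - pairing a (br (phi x) y).
Proof.
have hf : slin (fun y => pairing a (br (phi x) y)).
  by move=> c u v; rewrite brDr brZr pD2 pZ2.
have := slin_expand hf y; rewrite /= => ->.
rewrite pairing_row -sumrN; apply: eq_bigr => j _.
by rewrite mulrC mulrN.
Qed.

Lemma dualE x a : pairing x (dual_map phi a) = pairing (phi x) a.
Proof.
have hf : slin (fun x => pairing (phi x) a).
  by move=> c u v; rewrite phiD phiZ pD1 pZ1.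
have := slin_expand hf x; rewrite /= => ->.
by rewrite /dual_map pairing_rowr.
Qed.

Lemma dual_lin : lin (dual_map phi).
Proof.
move=> c a b; apply: vec_eq => x.
rewrite pD1 pZ1 !(pairingC _ x) !dualE.
by rewrite pD2 pZ2.
Qed.

End HL.


Section Defs2.
Variables (K : fieldType) (n : nat).
Local Notation V := 'rV[K]_n.
Variables (br : V -> V -> V) (phi : V -> V) (brd : V -> V -> V) (psi : V -> V).
Local Notation c := (coad br phi).
Local Notation cd := (coad brd psi).

Definition Qd x y a b : K := pairing (br x y) (brd a b) -
  (- pairing (cd a x) (c y b) + pairing (cd a y) (c x b)
   + pairing (cd b x) (c y a) - pairing (cd b y) (c x a)).

Definition C1 := forall x y a, cd (psi a) (br x y)
  = br (cd a x) (phi y) + br (phi x) (cd a y) + cd (c y a) (phi x) - cd (c x a) (phi y).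

Definition Nb (u v : (V * V)%type) : (V * V)%type :=
  (br u.1 v.1 + cd u.2 v.1 - cd v.2 u.1, brd u.2 v.2 + c u.1 v.2 - c v.1 u.2).
Definition Pk (u : (V * V)%type) : (V * V)%type := (phi u.1, psi u.2).
Definition Jb u v w := Nb (Pk u) (Nb v w) + Nb (Pk v) (Nb w u) + Nb (Pk w) (Nb u v).
End Defs2.

Lemma Qd_swap (K : fieldType) n (br phi brd psi : _) (x y a b : 'rV[K]_n) :
  Qd br phi brd psi x y a b = Qd brd psi br phi a b x y.
Proof.
rewrite /Qd (pairingC (br x y)) !(pairingC (coad br phi _ _)).
ring.
Qed.

Section Gen.
Variables (K : fieldType) (n : nat).
Local Notation V := 'rV[K]_n.
Variables (br : V -> V -> V) (phi : V -> V) (brd : V -> V -> V) (psi : V -> V).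
Hypotheses (HL1 : HomLie br phi) (WI1 : weakly_involutive br phi)
  (HL2 : HomLie brd psi) (WI2 : weakly_involutive brd psi)
  (ADJ : forall x a, pairing (phi x) a = pairing x (psi a)).
Local Notation c := (coad br phi).
Local Notation cd := (coad brd psi).

Lemma brl u y b : pairing (br u (phi y)) b = pairing u (c y b).
Proof. by rewrite (pairingC u) coadE // (br_skew HL1 (phi y)) pN2 opprK pairingC. Qed.

Lemma T3form w x b : pairing (cd w (phi x)) b = - pairing (cd b x) w.
Proof.
rewrite coadE // ADJ (phi_mul HL2) WI2 coadE // (br_skew HL2 w) pN2 opprK.
by [].
Qed.

Lemma C1_pair x y a b :
  pairing (cd (psi a) (br x y)) b
  - pairing (br (cd a x) (phi y) + br (phi x) (cd a y) + cd (c y a) (phi x)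
             - cd (c x a) (phi y)) b = - Qd br phi brd psi x y a b.
Proof.
rewrite !pD1 !pN1 !T3form (br_skew HL1 (phi x) (cd a y)) pN1 !brl.
rewrite coadE // WI2 /Qd; ring.
Qed.

Lemma C1_iff : C1 br phi brd psi <-> forall x y a b, Qd br phi brd psi x y a b = 0.
Proof.
split=> [H x y a b | H x y a].
  by apply/eqP; rewrite -oppr_eq0 -C1_pair H subrr.
apply: vec_eq => b; apply/eqP; rewrite -subr_eq0 C1_pair H oppr0 //.
Qed.

End Gen.


Section Gen2.
Variables (K : fieldType) (n : nat).
Local Notation V := 'rV[K]_n.
Variables (br : V -> V -> V) (phi : V -> V) (brd : V -> V -> V) (psi : V -> V).
Hypotheses (HL1 : HomLie br phi) (WI1 : weakly_involutive br phi)
  (HL2 : HomLie brd psi) (WI2 : weakly_involutive brd psi)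
  (ADJ : forall x a, pairing (phi x) a = pairing x (psi a)).
Local Notation c := (coad br phi).
Local Notation cd := (coad brd psi).

Lemma rep_beta x w : c (phi x) (psi w) = psi (c x w).
Proof.
apply: vec_eq => y.
rewrite coadE // WI1 (pairingC (psi w)) -ADJ (pairingC (psi _)) -ADJ pairingC.
by rewrite (pairingC (phi y)) coadE // -(phi_mul HL1).
Qed.

Lemma rep_br x y a : c (br x y) (psi a) = c (phi x) (c y a) - c (phi y) (c x a).
Proof.
apply: vec_eq => z.
have hC : br (phi z) (br x y) = - (br (phi x) (br y z) + br (phi y) (br z x)).
  by apply/eqP; rewrite -subr_eq0 opprK addrC (br_jac HL1).
rewrite pB1 !coadE // !WI1.
rewrite (pairingC (psi a)) -ADJ (phi_mul HL1) WI1 (br_skew HL1 _ (phi z)) hC.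
rewrite (br_skew HL1 z x) (brNr HL1) !pN1 !pD1 !pN1 opprK.
rewrite !(pairingC a); ring.
Qed.

Lemma R1 : HomLieRep br phi psi c.
Proof.
split.
- exact: phi_lin HL2.
- by move=> k x y w; apply: (coad_linl HL1).
- by move=> k x w w'; apply: (coad_linr).
- by move=> x w; apply: rep_beta.
- by move=> x y w; apply: rep_br.
Qed.

End Gen2.


Section PairE.
Variables (K : fieldType) (n : nat).
Local Notation V := 'rV[K]_n.
Lemma addE (u v : (V * V)%type) : u + v = (u.1 + v.1, u.2 + v.2). Proof. by []. Qed.
Lemma oppE (u : (V * V)%type) : - u = (- u.1, - u.2). Proof. by []. Qed.
Lemma zeroE : (0 : (V * V)%type) = (0, 0). Proof. by []. Qed.
Lemma scaleE (k : K) (u : (V * V)%type) : k *: u = (k *: u.1, k *: u.2). Proof. by []. Qed.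
End PairE.

Ltac vring := apply: vec_eq => ?; rewrite ?(pD1, pN1, p01); ring.

Section Gen3.
Variables (K : fieldType) (n : nat).
Local Notation V := 'rV[K]_n.
Variables (br : V -> V -> V) (phi : V -> V) (brd : V -> V -> V) (psi : V -> V).
Hypotheses (HL1 : HomLie br phi) (WI1 : weakly_involutive br phi)
  (HL2 : HomLie brd psi) (WI2 : weakly_involutive brd psi)
  (ADJ : forall x a, pairing (phi x) a = pairing x (psi a)).
Local Notation c := (coad br phi).
Local Notation cd := (coad brd psi).
Local Notation N := (Nb br phi brd psi).
Local Notation P := (Pk phi psi).
Local Notation J := (Jb br phi brd psi).

Lemma Nb_gany x p q : N (x, 0) (p, q) = (br x p - cd q x, c x q).
Proof.
rewrite /Nb /= (coad0l HL2) addr0 (br0l HL2) add0r (coad0r) subr0 //.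
Qed.
Lemma Nb_aany a p q : N (0, a) (p, q) = (cd a p, brd a q - c p a).
Proof.
rewrite /Nb /= (br0l HL1) add0r (coad0r) subr0 (coad0l HL1) addr0 //.
Qed.
Lemma Pk_g x : P (x, 0) = (phi x, 0).
Proof. by rewrite /Pk /= (phi0 HL2). Qed.
Lemma Pk_a a : P (0, a) = (0, psi a).
Proof. by rewrite /Pk /= (phi0 HL1). Qed.

Definition C1diff x y a := cd (psi a) (br x y)
  - (br (cd a x) (phi y) + br (phi x) (cd a y) + cd (c y a) (phi x) - cd (c x a) (phi y)).

Lemma Jgga x y a : J (x, 0) (y, 0) (0, a) = (C1diff x y a, 0).
Proof.
rewrite /Jb !Pk_g Pk_a (Nb_gany y) (Nb_aany a x) (Nb_gany x y) !Nb_gany Nb_aany !addE /=.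
rewrite ?(br0r HL1, br0r HL2, coad0l HL2, coad0l HL1, coad0r, sub0r, add0r, subr0, addr0).
rewrite ?(brNr HL1, coadNl HL2, coadNr).
congr pair.
  rewrite /C1diff (br_skew HL1 (cd a x)).
  by vring.
rewrite rep_br //.
by vring.
Qed.

Lemma Jggg x y z : J (x, 0) (y, 0) (z, 0) = 0.
Proof.
rewrite /Jb !Pk_g (Nb_gany y) (Nb_gany z) (Nb_gany x) !Nb_gany.
rewrite ?(br0r HL1, br0r HL2, coad0l HL2, coad0l HL1, coad0r, sub0r, add0r, subr0, addr0).
by rewrite !addE /= (br_jac HL1) !addr0.
Qed.

Lemma NbDl u u' v : N (u + u') v = N u v + N u' v.
Proof.
rewrite /Nb !addE /=; congr pair.
  rewrite (brDl HL1) (coadDl HL2) (coadDr); by vring.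
rewrite (brDl HL2) (coadDl HL1) (coadDr); by vring.
Qed.

Lemma Nb_skew u v : N u v = - N v u.
Proof.
rewrite /Nb oppE /=; congr pair.
  rewrite (br_skew HL1 u.1); by vring.
rewrite (br_skew HL2 u.2); by vring.
Qed.

Lemma NbDr u v v' : N u (v + v') = N u v + N u v'.
Proof. by rewrite Nb_skew NbDl opprD -!Nb_skew. Qed.

Lemma PkD u u' : P (u + u') = P u + P u'.
Proof. by rewrite /Pk !addE /= (phiD HL1) (phiD HL2). Qed.

Lemma Jb_cyc u v w : J u v w = J v w u.
Proof. by rewrite /Jb -addrA addrC. Qed.


Lemma ac6 (T : zmodType) (A A' B B' C C' : T) :
  (A + A') + (B + B') + (C + C') = (A + B + C) + (A' + B' + C').
Proof. by rewrite (addrACA A) (addrACA (A + B)). Qed.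

Lemma JbD1 u u' v w : J (u + u') v w = J u v w + J u' v w.
Proof. by rewrite /Jb PkD !(NbDl, NbDr) ac6. Qed.

Lemma JbD2 u v v' w : J u (v + v') w = J u v w + J u v' w.
Proof. by rewrite (Jb_cyc u) JbD1 -(Jb_cyc u v) -(Jb_cyc u v'). Qed.
Lemma JbD3 u v w w' : J u v (w + w') = J u v w + J u v w'.
Proof. by rewrite -(Jb_cyc (w + w')) JbD1 (Jb_cyc w) (Jb_cyc w'). Qed.

End Gen3.
Arguments Jb_cyc {K n br phi brd psi} u v w.


Definition sw (K : fieldType) n (u : ('rV[K]_n * 'rV[K]_n)%type) : ('rV[K]_n * 'rV[K]_n)%type := (u.2, u.1).

Section Gen4.
Variables (K : fieldType) (n : nat).
Local Notation V := 'rV[K]_n.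
Variables (br : V -> V -> V) (phi : V -> V) (brd : V -> V -> V) (psi : V -> V).
Hypotheses (HL1 : HomLie br phi) (WI1 : weakly_involutive br phi)
  (HL2 : HomLie brd psi) (WI2 : weakly_involutive brd psi)
  (ADJ : forall x a, pairing (phi x) a = pairing x (psi a)).
Local Notation c := (coad br phi).
Local Notation cd := (coad brd psi).
Local Notation N := (Nb br phi brd psi).
Local Notation P := (Pk phi psi).
Local Notation J := (Jb br phi brd psi).

Lemma ADJ' a x : pairing (psi a) x = pairing a (phi x).
Proof. by rewrite pairingC -ADJ pairingC. Qed.

Lemma J_swap u v w : J u v w = sw (Jb brd psi br phi (sw u) (sw v) (sw w)).
Proof. by []. Qed.

Lemma Jgaa x a b : J (x, 0) (0, a) (0, b) = (0, C1diff brd psi br phi a b x).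
Proof.
rewrite J_swap; change (sw (Jb brd psi br phi (0, x) (a, 0) (b, 0)) = (0, C1diff brd psi br phi a b x)).
by rewrite Jb_cyc Jgga //; exact: ADJ'.
Qed.

Lemma Jaaa a b d : J (0, a) (0, b) (0, d) = 0.
Proof.
rewrite J_swap; change (sw (Jb brd psi br phi (a, 0) (b, 0) (d, 0)) = 0).
by rewrite Jggg.
Qed.

Lemma pair_dec (x a : V) : (x, a) = (x, 0) + (0, a).
Proof. by rewrite addE /= addr0 add0r. Qed.

Lemma Jall : (forall x y a, C1diff br phi brd psi x y a = 0) ->
  (forall a b x, C1diff brd psi br phi a b x = 0) -> forall u v w, J u v w = 0.
Proof.
move=> H1 H2 [x a] [y b] [z d].
have gga : forall x y a, J (x, 0) (y, 0) (0, a) = 0.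
  by move=> ? ? ?; rewrite Jgga // H1.
have gaa : forall x a b, J (x, 0) (0, a) (0, b) = 0.
  by move=> ? ? ?; rewrite Jgaa H2.
rewrite (pair_dec x) (pair_dec y) (pair_dec z) !(JbD1, JbD2, JbD3) //.
rewrite Jggg // gga Jaaa // gaa.
rewrite (Jb_cyc (x, 0) (0, b)) (Jb_cyc (0, b)) gga.
rewrite (Jb_cyc (0, a) (y, 0)) gga.
rewrite (Jb_cyc (0, a) (y, 0)) gaa.
rewrite (Jb_cyc (0, a) (0, b)) (Jb_cyc (0, b)) gaa.
by rewrite !addr0.
Qed.

End Gen4.


Ltac vring2 := apply: vec_eq => ?; rewrite ?(pD1, pN1, p01, pZ1); ring.

Section Gen5.
Variables (K : fieldType) (n : nat).
Local Notation V := 'rV[K]_n.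
Variables (br : V -> V -> V) (phi : V -> V) (brd : V -> V -> V) (psi : V -> V).
Hypotheses (HL1 : HomLie br phi) (WI1 : weakly_involutive br phi)
  (HL2 : HomLie brd psi) (WI2 : weakly_involutive brd psi)
  (ADJ : forall x a, pairing (phi x) a = pairing x (psi a)).
Local Notation c := (coad br phi).
Local Notation cd := (coad brd psi).
Local Notation N := (Nb br phi brd psi).
Local Notation P := (Pk phi psi).
Local Notation J := (Jb br phi brd psi).
Local Notation B := (@standard_form K n).

Lemma NbZl k u v : N (k *: u) v = k *: N u v.
Proof.
rewrite /Nb !scaleE /=; congr pair.
  rewrite (brZl HL1) (coadZl HL2) (coadZr); by vring2.
rewrite (brZl HL2) (coadZl HL1) (coadZr); by vring2.
Qed.

Lemma Pk_mul u v : P (N u v) = N (P u) (P v).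
Proof.
have rb1 := rep_beta HL1 WI1 ADJ.
have rb2 := rep_beta HL2 WI2 (ADJ' ADJ).
rewrite /Nb /Pk /=; congr pair.
  by rewrite (phiD HL1) (phiN HL1) (phiD HL1) (phi_mul HL1) -!rb2.
by rewrite (phiD HL2) (phiN HL2) (phiD HL2) (phi_mul HL2) -!rb1.
Qed.

Lemma HL_N : (forall x y a, C1diff br phi brd psi x y a = 0) ->
  (forall a b x, C1diff brd psi br phi a b x = 0) -> HomLie N P.
Proof.
move=> H1 H2; split.
- split=> k u v w; first by rewrite NbDl // NbZl.
  by rewrite NbDr // (Nb_skew HL1 HL2 u (k *: v)) NbZl -scalerN -(Nb_skew HL1 HL2).
- exact: Nb_skew.
- by move=> k u v; rewrite /Pk !scaleE !addE /= (phiD HL1) (phiZ HL1) (phiD HL2) (phiZ HL2).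
- exact: Pk_mul.
- exact: Jall.
Qed.

Lemma B_inv u v w : B (N u v) w = B u (N (P v) w).
Proof.
case: u => x a; case: v => y b; case: w => z d.
rewrite /standard_form /Nb /Pk /=.
rewrite !(pD1, pN1, pD2, pN2).
rewrite !(pairingC z (c _ _)) !(pairingC x (c _ _)) !coadE // !WI1 !WI2.
rewrite (br_skew HL1 y x) (ADJ' ADJ) (phi_mul HL1) WI1 (br_skew HL1 z) (br_skew HL2 b a).
rewrite ADJ (phi_mul HL2) WI2 (br_skew HL2 d) !(pN1, pN2).
rewrite (pairingC d) (pairingC (br (phi y) z)); ring.
Qed.

Lemma B_nondeg u : (forall v, B u v = 0) -> u = 0.
Proof.
case: u => p q H; rewrite zeroE; congr pair.
  apply: vec_eq => b; have := H (0, b); rewrite /standard_form /= p01 addr0 => ->.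
  by rewrite p01.
apply: vec_eq => y; have := H (y, 0); rewrite /standard_form /= p02 add0r pairingC => ->.
by rewrite p01.
Qed.

Lemma manin_of : (forall x y a, C1diff br phi brd psi x y a = 0) ->
  (forall a b x, C1diff brd psi br phi a b x = 0) ->
  manin_triple br phi brd psi N P B.
Proof.
move=> H1 H2; split.
- by split.
- exact: HL_N.
- split.
  + by move=> k u v w; rewrite /standard_form /= pD1 pZ1 pD2 pZ2; ring.
  + split; last by move=> u v; rewrite /standard_form addrC.
    by move=> k u v w; rewrite /standard_form /= pD1 pZ1 pD2 pZ2; ring.
  + exact: B_nondeg.
  + exact: B_inv.
  + by move=> u v; rewrite /standard_form /Pk /= !ADJ.
- split.
  + by move=> x y; rewrite /standard_form /= !p02 addr0.
  + by move=> x y; rewrite (Nb_gany br phi HL2) (coad0r) (coad0l HL2) subr0.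
  + by move=> x; rewrite (Pk_g phi HL2).
- split.
  + by move=> x y; rewrite /standard_form /= !p01 addr0.
  + by move=> a b; rewrite (Nb_aany brd psi HL1) (coad0r) (coad0l HL1) subr0.
  + by move=> a; rewrite (Pk_a psi HL1).
Qed.

End Gen5.

Section Gen6.
Variables (K : fieldType) (n : nat).
Local Notation V := 'rV[K]_n.
Variables (br : V -> V -> V) (phi : V -> V) (brd : V -> V -> V) (psi : V -> V).
Hypotheses (HL1 : HomLie br phi) (WI1 : weakly_involutive br phi)
  (HL2 : HomLie brd psi) (WI2 : weakly_involutive brd psi)
  (ADJ : forall x a, pairing (phi x) a = pairing x (psi a)).
Local Notation c := (coad br phi).
Local Notation cd := (coad brd psi).
Local Notation N := (Nb br phi brd psi).
Local Notation P := (Pk phi psi).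
Local Notation J := (Jb br phi brd psi).
Local Notation B := (@standard_form K n).

Lemma C1_of_manin brk phik : manin_triple br phi brd psi brk phik B ->
  forall x y a, C1diff br phi brd psi x y a = 0.
Proof.
case=> _ [[brkl brkr] brks phikl _ jac] [_ _ _ inv _] [_ gg pg] [_ aa pa].
have brkD1 u u' v : brk (u + u') v = brk u v + brk u' v.
  by have := brkl 1 u u' v; rewrite !scale1r.
have brkD2 u v v' : brk u (v + v') = brk u v + brk u v'.
  by have := brkr 1 u v v'; rewrite !scale1r.
have phikD u u' : phik (u + u') = phik u + phik u'.
  by have := phikl 1 u u'; rewrite !scale1r.
have hp u : phik u = P u.
  by case: u => x a; rewrite [in LHS]pair_dec phikD pg pa addE /= addr0 add0r.
have mixed x a : brk (x, 0) (0, a) = (- (cd a x), c x a).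
  have e1 b : pairing (brk (x, 0) (0, a)).1 b = pairing x (brd (psi a) b).
    by have := inv (x, 0) (0, a) (0, b); rewrite pa aa /standard_form /= p01 p02 !addr0.
  have e2 y : pairing y (brk (x, 0) (0, a)).2 = - pairing (br (phi x) y) a.
    have := inv (0, a) (x, 0) (y, 0); rewrite pg gg /standard_form /= (brks (0, a)) oppE /=.
    by rewrite p02 p01 !add0r pN2 => h; rewrite -h opprK.
  rewrite [LHS]surjective_pairing; congr pair.
    by apply: vec_eq => b; rewrite e1 pN1 coadE // opprK.
  by apply: vec_eq => y; rewrite pairingC e2 coadE // pairingC.
have hb u v : brk u v = N u v.
  case: u => x a; case: v => y b.
  rewrite [in LHS](pair_dec x) [in LHS](pair_dec y) !brkD1 !brkD2 gg aa !mixed.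
  rewrite (brks (0, a) (y, 0)) mixed.
  rewrite /Nb !addE oppE /=; congr pair.
    by vring.
  by vring.
move=> x y a; have := jac (x, 0) (y, 0) (0, a); rewrite !hb !hp.
change (J (x, 0) (y, 0) (0, a) = 0 -> C1diff br phi brd psi x y a = 0).
by rewrite Jgga // => /(congr1 fst).
Qed.

End Gen6.


Section Gen7.
Variables (K : fieldType) (n : nat).
Local Notation V := 'rV[K]_n.
Variables (br : V -> V -> V) (phi : V -> V) (brd : V -> V -> V) (psi : V -> V).
Hypotheses (HL1 : HomLie br phi) (WI1 : weakly_involutive br phi)
  (HL2 : HomLie brd psi) (WI2 : weakly_involutive brd psi)
  (ADJ : forall x a, pairing (phi x) a = pairing x (psi a)).
Local Notation c := (coad br phi).
Local Notation cd := (coad brd psi).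
Local Notation Q := (Qd br phi brd psi).

Lemma Qd_linl x y b : slin (fun a => Q x y a b).
Proof.
move=> k a a'; rewrite /Qd.
rewrite (brDl HL2) (brZl HL2) !(coadDl HL2) !(coadZl HL2) !coadDr !coadZr.
rewrite !(pD1, pZ1, pD2, pZ2); ring.
Qed.

Lemma Qd_anti x y a b : Q x y a b = - Q x y b a.
Proof. by rewrite /Qd (br_skew HL2 a) pN2; ring. Qed.

Lemma Qbasis x y : (forall k l, Q x y (ev K k) (ev K l) = 0) -> forall a b, Q x y a b = 0.
Proof.
move=> H a b.
have := slin_expand (Qd_linl x y b) a; rewrite /= => ->.
apply: big1 => k _; rewrite Qd_anti.
have := slin_expand (Qd_linl x y (ev K k)) b; rewrite /= => ->.
by rewrite big1 ?oppr0 ?mulr0 // => l _; rewrite H mulr0.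
Qed.

Lemma tm_entry (f h : V -> V) y k l :
  tensor_map f h (cobracket brd y) k l
  = pairing y (brd (\row_i (f (ev K i)) 0 k) (\row_j (h (ev K j)) 0 l)).
Proof.
set F := \row_i _; set H := \row_j _.
have s1 : slin (fun F => pairing y (brd F H)).
  by move=> t u v; rewrite (brDl HL2) (brZl HL2) pD2 pZ2.
have := slin_expand s1 F; rewrite /= => ->.
rewrite /tensor_map summxE; apply: eq_bigr => i _.
have s2 : slin (fun H => pairing y (brd (ev K i) H)).
  by move=> t u v; rewrite (brDr HL2) (brZr HL2) pD2 pZ2.
have := slin_expand s2 H; rewrite /= => ->.
rewrite summxE mulr_sumr; apply: eq_bigr => j _.
rewrite !mxE big_ord1 !mxE.
ring.
Qed.

End Gen7.


Section Gen8.
Variables (K : fieldType) (n : nat).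
Local Notation V := 'rV[K]_n.
Variables (br : V -> V -> V) (phi : V -> V) (brd : V -> V -> V).
Local Notation psi := (dual_map phi).
Hypotheses (HL1 : HomLie br phi) (WI1 : weakly_involutive br phi)
  (HL2 : HomLie brd psi) (WI2 : weakly_involutive brd psi).
Local Notation c := (coad br phi).
Local Notation cd := (coad brd psi).
Local Notation Q := (Qd br phi brd psi).

Lemma rowF x k : \row_i (br (phi x) (ev K i)) 0 k = - c x (ev K k).
Proof.
by apply/rowP => i; rewrite !mxE opprK -pairing_ev pairingC.
Qed.

Lemma rowH l : \row_j (phi (ev K j)) 0 l = psi (ev K l).
Proof. by apply/rowP => j; rewrite !mxE pairing_ev. Qed.

Lemma BA_entry x y k l :
  cobracket brd (br x y) k l
  - (ad_tensor br phi (phi x) (cobracket brd y)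
     - ad_tensor br phi (phi y) (cobracket brd x)) k l
  = Q x y (ev K k) (ev K l).
Proof.
rewrite /ad_tensor !mxE !(tm_entry HL2) !rowF !rowH.
rewrite /Qd !coadE //.
rewrite !(brNl HL2) !(brNr HL2) (br_skew HL2 (c x _)) (br_skew HL2 (c y _)) !pN2.
ring.
Qed.

End Gen8.

Unset Implicit Arguments. Set Strict Implicit. Set Printing Implicit Defensive.

Theorem theorem3p12 (K : fieldType) (n : nat)
    (br : 'rV[K]_n -> 'rV[K]_n -> 'rV[K]_n) (phi : 'rV[K]_n -> 'rV[K]_n)
    (brd : 'rV[K]_n -> 'rV[K]_n -> 'rV[K]_n) :
  HomLie br phi -> weakly_involutive br phi ->
  HomLie brd (dual_map phi) -> weakly_involutive brd (dual_map phi) ->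
  [/\ hom_lie_bialgebra br phi brd <->
        matched_pair br phi brd (dual_map phi) (coad br phi) (coad_dual phi brd),
      matched_pair br phi brd (dual_map phi) (coad br phi) (coad_dual phi brd) <->
        (exists (brk : ('rV[K]_n * 'rV[K]_n)%type -> ('rV[K]_n * 'rV[K]_n)%type
                        -> ('rV[K]_n * 'rV[K]_n)%type)
                (phik : ('rV[K]_n * 'rV[K]_n)%type -> ('rV[K]_n * 'rV[K]_n)%type),
           manin_triple br phi brd (dual_map phi) brk phik (@standard_form K n)) &
      hom_lie_bialgebra br phi brd <->
        (exists (brk : ('rV[K]_n * 'rV[K]_n)%type -> ('rV[K]_n * 'rV[K]_n)%type
                        -> ('rV[K]_n * 'rV[K]_n)%type)
                (phik : ('rV[K]_n * 'rV[K]_n)%type -> ('rV[K]_n * 'rV[K]_n)%type),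
           manin_triple br phi brd (dual_map phi) brk phik (@standard_form K n))].
Proof.
move=> HL1 WI1 HL2 WI2.
have ADJ : forall x a, pairing (phi x) a = pairing x (dual_map phi a).
  by move=> x a; rewrite (dualE HL1).
have ADJ2 := ADJ' ADJ.
pose Qall := forall x y a b, Qd br phi brd (dual_map phi) x y a b = 0.
have QBA : hom_lie_bialgebra br phi brd <-> Qall.
  split=> [H x y | H x y].
    by apply: (Qbasis HL2) => k l; rewrite -BA_entry // H subrr.
  by apply/matrixP => k l; apply/eqP; rewrite -GRing.subr_eq0 BA_entry // H.
have QC1 : C1 br phi brd (dual_map phi) <-> Qall := C1_iff HL1 HL2 WI2 ADJ.
have QC2 : C1 brd (dual_map phi) br phi <-> Qall.
  rewrite (C1_iff HL2 HL1 WI1 ADJ2); split=> H x y a b.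
    by rewrite Qd_swap H.
  by rewrite Qd_swap H.
have MPQ : matched_pair br phi brd (dual_map phi) (coad br phi) (coad_dual phi brd) <-> Qall.
  split.
    by case=> _ _ _ _ [h1 _]; apply/QC1; exact: h1.
  move=> HQ; split => //.
  - exact: R1 HL1 WI1 HL2 ADJ.
  - exact: R1 HL2 WI2 HL1 ADJ2.
  split.
    by have := proj2 QC1 HQ.
  by move=> x x' y'; have := proj2 QC2 HQ x' y' x.
have MPM : matched_pair br phi brd (dual_map phi) (coad br phi) (coad_dual phi brd) <->
        (exists (brk : ('rV[K]_n * 'rV[K]_n)%type -> ('rV[K]_n * 'rV[K]_n)%type
                        -> ('rV[K]_n * 'rV[K]_n)%type)
                (phik : ('rV[K]_n * 'rV[K]_n)%type -> ('rV[K]_n * 'rV[K]_n)%type),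
           manin_triple br phi brd (dual_map phi) brk phik (@standard_form K n)).
  split.
    move/MPQ => HQ.
    have h1 := proj2 QC1 HQ; have h2 := proj2 QC2 HQ.
    exists (Nb br phi brd (dual_map phi)), (Pk phi (dual_map phi)).
    apply: manin_of => //.
      by move=> x y a; rewrite /C1diff h1 GRing.subrr.
    by move=> a b x; rewrite /C1diff h2 GRing.subrr.
  case=> brk [phik HM]; apply/MPQ/QC1 => x y a.
  apply/eqP; rewrite -GRing.subr_eq0; apply/eqP.
  exact: (C1_of_manin HL1 WI1 HL2 ADJ HM x y a).
split => //.
- by rewrite QBA MPQ.
- by rewrite QBA -MPQ.
Qed.
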